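(* Let $N\ge 1$ be an integer, $0<\lambda<1$, $\nu=1-\lambda$ and $0<\delta\le 1$. Then $F(N,\delta,\lambda)=\zeta(N,\delta,\lambda)/\delta$, where $$\zeta(N,\delta,\lambda)=\begin{cases}0,& \delta\le \lambda^N,\\ \zeta(N,\delta,\lambda,k_* ),&\delta>\lambda^N,\end{cases}\qquad \zeta(N,\delta,\lambda,k):=\frac{\lambda\{\delta[1+(N-k)\nu]-\lambda^k\}}{\nu(k\nu+N\lambda)},$$ and $k_*$ is the largest nonnegative integer $k$ satisfying $(N+1-k)\lambda^k+k\lambda^{k-1}\ge (N+1)\delta$ (with the convention that the left-hand side equals $N+1$ for $k=0$).
   Context: Let $\mathcal H$ be a Hilbert space of finite dimension $D\ge 2$ and $|\Psi\rangle\in\mathcal H$ a unit vector. For $0\le\lambda<1$ let $\Omega_\lambda=|\Psi\rangle\langle\Psi|+\lambda(1-|\Psi\rangle\langle\Psi|)$ (a homogeneous strategy). For an integer $N\ge1$ and a density operator $\rho$ on $\mathcal H^{\otimes(N+1)}$ put $p_\rho=\mathrm{tr}[(\Omega_\lambda^{\otimes N}\otimes 1)\rho]$ and $f_\rho=\mathrm{tr}[(\Omega_\lambda^{\otimes N}\otimes|\Psi\rangle\langle\Psi|)\rho]$. With minimization over permutation-invariant density operators $\rho$ on $\mathcal H^{\otimes(N+1)}$, define $\zeta(N,\delta,\lambda)=\min\{f_\rho: p_\rho\ge\delta\}$ for $0\le\delta\le1$ and $F(N,\delta,\lambda)=\min\{f_\rho/p_\rho: p_\rho\ge\delta\}$ for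 $0<\delta\le1$. *)

(* Defs.v *)
From HB Require Import structures.
From mathcomp Require Import all_boot all_order all_algebra perm.
From mathcomp Require Import reals.
From mathcomp.real_closed Require Import complex.
Set Implicit Arguments. Unset Strict Implicit. Unset Printing Implicit Defensive.
Import Order.TTheory GRing.Theory Num.Theory.
Local Open Scope ring_scope.

(* Multi-indices of H^{(x) n}, H = C^D : functions from the n tensor
   factors to basis labels of C^D.  Operators on H^{(x) n} are square
   matrices indexed by 'I_#|multi-indices| (#| | = D^n); entry (i, j)
   corresponds to the multi-indices (enum_val i, enum_val j). *)
Notation midx D n := {ffun 'I_n -> 'I_D}.
Notation opT R D n := 'M[R[i]]_(#|{: midx D n}|).

Section QDefs.
Variable R : realType.
Local Notation C := R[i].

Definition adj m n (A : 'M[C]_(m, n)) : 'M[C]_(n, m) := map_mx Num.conj A^T.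

Definition tensop D n (A : 'I_n -> 'M[C]_D) : opT R D n :=
  \matrix_(i, j) \prod_(k < n)
     A k ((enum_val i : midx D n) k) ((enum_val j : midx D n) k).

Definition proj D (Psi : 'cV[C]_D) : 'M[C]_D := Psi *m adj Psi.

Definition unit_vector D (Psi : 'cV[C]_D) : Prop := (adj Psi *m Psi) 0 0 = 1.

Definition Omega D (Psi : 'cV[C]_D) (lam : R) : 'M[C]_D :=
  proj Psi + (lam%:C)%C *: (1%:M - proj Psi).

Definition density_op m (rho : 'M[C]_m) : Prop :=
  [/\ adj rho = rho,
      (forall v : 'cV[C]_m, 0 <= (adj v *m rho *m v) 0 0)
    & \tr rho = 1].

Definition perm_invariant D n (rho : opT R D n) : Prop :=
  forall (s : 'S_n) (a b : midx D n),
    rho (enum_rank a) (enum_rank b)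
    = rho (enum_rank [ffun k => a (s k)]) (enum_rank [ffun k => b (s k)]).

Definition OmN_tens D (Psi : 'cV[C]_D) (lam : R) N (X : 'M[C]_D) : opT R D N.+1 :=
  tensop (fun k : 'I_N.+1 => if (k < N)%N then Omega Psi lam else X).

Definition p_rho D (Psi : 'cV[C]_D) (lam : R) N (rho : opT R D N.+1) : R :=
  complex.Re (\tr (OmN_tens Psi lam N 1%:M *m rho)).

Definition f_rho D (Psi : 'cV[C]_D) (lam : R) N (rho : opT R D N.+1) : R :=
  complex.Re (\tr (OmN_tens Psi lam N (proj Psi) *m rho)).

Definition feasible D (Psi : 'cV[C]_D) (lam : R) N (delta : R) (rho : opT R D N.+1) :=
  [/\ density_op rho, perm_invariant rho & delta <= p_rho Psi lam rho].

Definition IsMin (S : R -> Prop) (x : R) : Prop := S x /\ forall y, S y -> x <= y.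

(* values f_rho over feasible rho (minimum = zeta(N, delta, lambda)) *)
Definition zeta_values D (Psi : 'cV[C]_D) (lam : R) (N : nat) (delta : R) : R -> Prop :=
  fun x => exists rho : opT R D N.+1, feasible Psi lam delta rho /\ x = f_rho Psi lam rho.

(* values f_rho / p_rho over feasible rho (minimum = F(N, delta, lambda)) *)
Definition F_values D (Psi : 'cV[C]_D) (lam : R) (N : nat) (delta : R) : R -> Prop :=
  fun x => exists rho : opT R D N.+1, feasible Psi lam delta rho /\
                       x = f_rho Psi lam rho / p_rho Psi lam rho.

Definition kstar_lhs (N k : nat) (lam : R) : R :=
  if k == 0%N then N.+1%:R
  else (N.+1%:R - k%:R) * lam ^+ k + k%:R * lam ^+ k.-1.

Definition is_kstar (N : nat) (delta lam : R) (ks : nat) : Prop :=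
  N.+1%:R * delta <= kstar_lhs N ks lam /\
  forall k : nat, N.+1%:R * delta <= kstar_lhs N k lam -> (k <= ks)%N.

Definition zeta_k (N : nat) (delta lam : R) (k : nat) : R :=
  let nu := 1 - lam in
  lam * (delta * (1 + (N%:R - k%:R) * nu) - lam ^+ k)
  / (nu * (k%:R * nu + N%:R * lam)).

Definition zeta_formula (N : nat) (delta lam : R) (ks : nat) : R :=
  if delta <= lam ^+ N then 0 else zeta_k N delta lam ks.

End QDefs.

(* Main.v *)
Require Import Defs.
From HB Require Import structures.
From mathcomp Require Import all_boot all_order all_algebra perm.
From mathcomp Require Import reals.
From mathcomp.real_closed Require Import complex.
Import Order.TTheory GRing.Theory Num.Theory.
Local Open Scope ring_scope.
From mathcomp Require Import ring lra.
Set Implicit Arguments. Unset Strict Implicit. Unset Printing Implicit Defensive.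

Section Tens.
Variable R : realType.
Local Notation C := R[i].
Variables (D n : nat).
Local Notation T := (midx D n).

Lemma tensopE (M : 'I_n -> 'M[C]_D) (a b : T) :
  tensop M (enum_rank a) (enum_rank b) = \prod_k M k (a k) (b k).
Proof. by rewrite /tensop mxE !enum_rankK. Qed.

Lemma sum_midx (F : 'I_#|{:T}| -> C) : \sum_i F i = \sum_(a : T) F (enum_rank a).
Proof. by rewrite (reindex enum_rank) //; apply: onW_bij; apply: enum_rank_bij. Qed.

Lemma eq_tensop (M M' : 'I_n -> 'M[C]_D) :
  (forall k, M k = M' k) -> tensop M = tensop M'.
Proof.
move=> H; apply/matrixP => i j; rewrite /tensop !mxE.
by apply: eq_bigr => k _; rewrite H.
Qed.

Lemma tensop_mul (A B : 'I_n -> 'M[C]_D) :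
  tensop A *m tensop B = tensop (fun k => A k *m B k).
Proof.
apply/matrixP => i j; rewrite /tensop !mxE.
under [RHS]eq_bigr do rewrite mxE.
rewrite bigA_distr_bigA sum_midx; apply: eq_bigr => a _.
by rewrite !mxE enum_rankK -big_split.
Qed.

Lemma tensop_tr (A : 'I_n -> 'M[C]_D) : \tr (tensop A) = \prod_k \tr (A k).
Proof.
rewrite /mxtrace sum_midx /tensop bigA_distr_bigA; apply: eq_bigr => a _.
by rewrite mxE enum_rankK.
Qed.

Lemma tensop1 : tensop (fun _ => 1%:M) = 1%:M :> opT R D n.
Proof.
apply/matrixP => i j; rewrite /tensop !mxE.
have [<-|nij] := eqVneq i j.
  by rewrite big1 // => k _; rewrite mxE eqxx.
have : ~~ [forall k, enum_val i k == enum_val j k].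
  apply/negP => /forallP H; move/eqP: nij; apply; apply: enum_val_inj.
  by apply/ffunP => k; apply/eqP.
rewrite negb_forall => /existsP [k Hk].
by rewrite (bigD1 k) //= mxE (negbTE Hk) mul0r.
Qed.

Lemma tensop_scale (c : 'I_n -> C) (M : 'I_n -> 'M[C]_D) :
  tensop (fun k => c k *: M k) = (\prod_k c k) *: tensop M.
Proof.
apply/matrixP => i j; rewrite /tensop !mxE.
by rewrite -big_split; apply: eq_bigr => k _; rewrite !mxE.
Qed.

Lemma tensop_expand (X Y : 'I_n -> 'M[C]_D) :
  tensop (fun k => X k + Y k) =
  \sum_(A : {set 'I_n}) tensop (fun k => if k \in A then X k else Y k).
Proof.
apply/matrixP => i j; rewrite /tensop mxE summxE.
under eq_bigr do rewrite mxE.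
rewrite bigA_distr; apply: eq_bigr => A _; rewrite mxE.
by apply: eq_bigr => k _; case: (k \in A).
Qed.

Lemma tensop0 (M : 'I_n -> 'M[C]_D) k0 : M k0 = 0 -> tensop M = 0.
Proof.
move=> H; apply/matrixP => i j; rewrite /tensop !mxE.
by rewrite (bigD1 k0) //= H mxE mul0r.
Qed.

Lemma adj_tensop (M : 'I_n -> 'M[C]_D) :
  adj (tensop M) = tensop (fun k => adj (M k)).
Proof.
apply/matrixP => i j; rewrite /adj /tensop !mxE rmorph_prod.
by apply: eq_bigr => k _; rewrite !mxE.
Qed.

End Tens.

Section Adj.
Variable R : realType.
Local Notation C := R[i].

Lemma adjM m n p (A : 'M[C]_(m, n)) (B : 'M[C]_(n, p)) : adj (A *m B) = adj B *m adj A.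
Proof. by rewrite /adj trmx_mul map_mxM. Qed.

Lemma adjK m n (A : 'M[C]_(m, n)) : adj (adj A) = A.
Proof. by apply/matrixP => i j; rewrite /adj !mxE conjCK. Qed.

Lemma adj1 m : adj (1%:M : 'M[C]_m) = 1%:M.
Proof.
apply/matrixP => i j; rewrite /adj !mxE eq_sym.
by case: (i == j); rewrite /= ?conjC0 ?conjC1.
Qed.

Lemma adjB m n (A B : 'M[C]_(m, n)) : adj (A - B) = adj A - adj B.
Proof. by apply/matrixP => i j; rewrite /adj !mxE rmorphB. Qed.

Lemma adjE m n (A : 'M[C]_(m, n)) i j : adj A i j = (A j i)^*.
Proof. by rewrite /adj !mxE. Qed.

Lemma scaleE m n (a : C) (A : 'M[C]_(m, n)) i j : (a *: A) i j = a * A i j.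
Proof. by rewrite mxE. Qed.

Lemma delta_quad m (M : 'M[C]_m) i :
  (adj (delta_mx i 0 : 'cV[C]_m) *m M *m (delta_mx i 0 : 'cV[C]_m)) 0 0 = M i i.
Proof.
have -> : adj (delta_mx i 0 : 'cV[C]_m) = delta_mx 0 i.
  apply/matrixP => a b; rewrite adjE !mxE.
  by case: (b == i); case: (a == 0); rewrite /= ?conjC0 ?conjC1.
by rewrite -rowE -colE !mxE.
Qed.

Lemma quad_ge0 m (u : 'cV[C]_m) : 0 <= (adj u *m u) 0 0.
Proof.
rewrite !mxE; apply: sumr_ge0 => j _; rewrite adjE mulrC; exact: mul_conjC_ge0.
Qed.

Lemma tr_psd m (Pm rho : 'M[C]_m) :
  Pm *m Pm = Pm -> adj Pm = Pm ->
  (forall v : 'cV[C]_m, 0 <= (adj v *m rho *m v) 0 0) ->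
  0 <= \tr (Pm *m rho).
Proof.
move=> Hi Hh Hr.
rewrite -{1}Hi -mulmxA mxtrace_mulC -mulmxA.
rewrite /mxtrace; apply: sumr_ge0 => i _.
rewrite -delta_quad.
have := Hr (Pm *m (delta_mx i 0 : 'cV[C]_m)).
by rewrite adjM Hh !mulmxA.
Qed.

Lemma ReM_real (x : R) (z : C) : complex.Re ((x%:C)%C * z) = x * complex.Re z.
Proof. by case: z => a b /=; rewrite mul0r subr0. Qed.

Lemma ReD (z w : C) : complex.Re (z + w) = complex.Re z + complex.Re w.
Proof. by case: z; case: w. Qed.

Lemma Re_sum (I : Type) (r : seq I) (P : pred I) (F : I -> C) :
  complex.Re (\sum_(i <- r | P i) F i) = \sum_(i <- r | P i) complex.Re (F i).
Proof. by apply: (big_morph _ ReD). Qed.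

Lemma tr_sum m (I : Type) (r : seq I) (P : pred I) (F : I -> 'M[C]_m) :
  \tr (\sum_(i <- r | P i) F i) = \sum_(i <- r | P i) \tr (F i).
Proof. by apply: (big_morph _ (@mxtraceD _ _)); rewrite mxtrace0. Qed.

Lemma Re_ge0 (z : C) : 0 <= z -> 0 <= complex.Re z.
Proof. by rewrite lecE => /andP [_ ]. Qed.

End Adj.

Section Proj.
Variable R : realType.
Local Notation C := R[i].
Variables (D : nat) (Psi : 'cV[C]_D).
Hypothesis HPsi : unit_vector Psi.

Definition PP := proj Psi.
Definition QQ := 1%:M - PP.

Lemma PsiPsi : adj Psi *m Psi = 1%:M.
Proof. by rewrite [adj Psi *m Psi]mx11_scalar HPsi. Qed.

Lemma PP_idem : PP *m PP = PP.
Proof.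
by rewrite /PP /proj mulmxA -[Psi *m adj Psi *m Psi]mulmxA PsiPsi mulmx1.
Qed.

Lemma PP_herm : adj PP = PP.
Proof. by rewrite /PP /proj adjM adjK. Qed.

Lemma QQ_idem : QQ *m QQ = QQ.
Proof.
rewrite /QQ mulmxBl mul1mx mulmxBr mulmx1 PP_idem.
by rewrite subrr subr0.
Qed.

Lemma QP0 : QQ *m PP = 0.
Proof. by rewrite /QQ mulmxBl mul1mx PP_idem subrr. Qed.

Lemma PQ0 : PP *m QQ = 0.
Proof. by rewrite /QQ mulmxBr mulmx1 PP_idem subrr. Qed.

Lemma QQ_herm : adj QQ = QQ.
Proof. by rewrite /QQ adjB adj1 PP_herm. Qed.

Lemma trPP : \tr PP = 1.
Proof.
rewrite /PP /proj mxtrace_mulC PsiPsi.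
by rewrite /mxtrace big_ord1 mxE.
Qed.

Lemma trQQ : \tr QQ = D%:R - 1.
Proof. by rewrite /QQ linearB /= mxtrace1 trPP. Qed.

Lemma QQPP : QQ + PP = 1%:M.
Proof. by rewrite /QQ subrK. Qed.

Variable n : nat.

Definition Pi (A : {set 'I_n}) : opT R D n :=
  tensop (fun k : 'I_n => if k \in A then QQ else PP).

Lemma Pi_idem A : Pi A *m Pi A = Pi A.
Proof.
rewrite /Pi tensop_mul; apply: eq_tensop => k.
by case: (k \in A); rewrite ?QQ_idem ?PP_idem.
Qed.

Lemma Pi_herm A : adj (Pi A) = Pi A.
Proof.
rewrite /Pi adj_tensop; apply: eq_tensop => k.
by case: (k \in A); rewrite ?QQ_herm ?PP_herm.
Qed.

Lemma Pi_orth A B : A != B -> Pi A *m Pi B = 0.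
Proof.
move=> nAB; rewrite /Pi tensop_mul.
have : exists k, (k \in A) != (k \in B).
  apply/existsP; apply/negP => /forallP H; move/eqP: nAB; apply.
  by apply/setP => k; apply/eqP.
case=> k Hk; apply: (tensop0 (k0 := k)).
by move: Hk; case: (k \in A); case: (k \in B); rewrite //= ?QP0 ?PQ0.
Qed.

Lemma Pi_tr A : \tr (Pi A) = (D%:R - 1) ^+ #|A|.
Proof.
rewrite /Pi tensop_tr.
rewrite (eq_bigr (fun k => if k \in A then (D%:R - 1) else 1)); last first.
  by move=> k _; case: (k \in A); rewrite ?trQQ ?trPP.
by rewrite -big_mkcond /= prodr_const.
Qed.

Lemma Pi_sum : \sum_(A : {set 'I_n}) Pi A = 1%:M.
Proof.
rewrite /Pi -tensop_expand.
rewrite -(tensop1 R D n); apply: eq_tensop => k; exact: QQPP.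
Qed.

End Proj.


Section Scalar.
Variable R : realType.
Variables (N : nat) (lam : R).
Hypotheses (HN : (1 <= N)%N) (Hl0 : 0 < lam) (Hl1 : lam < 1).

Definition SLp (j : nat) : R := kstar_lhs N j lam.
Definition SLf (j : nat) : R := (N.+1%:R - j%:R) * lam ^+ j.

Lemma nu_gt0 : 0 < 1 - lam.
Proof. by rewrite subr_gt0. Qed.

Lemma Nr_gt0 : 0 < (N%:R : R).
Proof. by rewrite ltr0n. Qed.

Lemma Lp_step j : lam * (SLp j - SLp j.+1) =
  (1 - lam) * lam ^+ j * (N%:R * lam + j%:R * (1 - lam)).
Proof.
rewrite /SLp /kstar_lhs /=; case: j => [|i] /=.
  rewrite !expr0 !expr1; ring.
rewrite !exprS; ring.
Qed.

Lemma Lp_dec j : SLp j.+1 <= SLp j.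
Proof.
have H := Lp_step j.
have : 0 <= lam * (SLp j - SLp j.+1).
  rewrite H; apply: mulr_ge0; first apply: mulr_ge0.
  - exact: ltW nu_gt0.
  - exact: exprn_ge0 (ltW Hl0).
  apply: addr_ge0; apply: mulr_ge0; rewrite ?ler0n ?(ltW Hl0) ?(ltW nu_gt0) //.
rewrite pmulr_rge0 // subr_ge0 //.
Qed.

Lemma Lp_mono j m : (j <= m)%N -> SLp m <= SLp j.
Proof.
move/subnK => <-; elim: (m - j)%N => [|d IH]; first by rewrite add0n.
by rewrite addSn; apply: le_trans IH; apply: Lp_dec.
Qed.

Lemma Lp_Nplus1 : SLp N.+1 = N.+1%:R * lam ^+ N.
Proof. rewrite /SLp /kstar_lhs /= subrr mul0r add0r //. Qed.

Lemma Lf_Nplus1 : SLf N.+1 = 0.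
Proof. by rewrite /SLf subrr mul0r. Qed.

Variable k : nat.
Hypothesis Hk : (k <= N)%N.

Definition den : R := (1 - lam) * (k%:R * (1 - lam) + N%:R * lam).
Definition ss : R := lam * (1 + (N%:R - k%:R) * (1 - lam)) / den.
Definition c0 : R := - lam ^+ k.+1 / den.
Definition HH (j : nat) : R := SLf j - ss * SLp j.

Lemma inner_gt0 : 0 < k%:R * (1 - lam) + N%:R * lam.
Proof.
apply: ltr_wpDl; first by apply: mulr_ge0; rewrite ?ler0n ?(ltW nu_gt0).
by apply: mulr_gt0; rewrite ?Nr_gt0.
Qed.

Lemma den_gt0 : 0 < den.
Proof. by apply: mulr_gt0; [exact: nu_gt0 | exact: inner_gt0]. Qed.

Lemma ss_gt0 : 0 < ss.
Proof.
apply: divr_gt0; last exact: den_gt0.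
apply: mulr_gt0 => //; apply: ltr_wpDr; last exact: ltr01.
apply: mulr_ge0; last exact: ltW nu_gt0.
by rewrite subr_ge0 ler_nat.
Qed.

Lemma c0_lt0 : c0 < 0.
Proof.
rewrite /c0 mulNr oppr_lt0; apply: divr_gt0; last exact: den_gt0.
exact: exprn_gt0.
Qed.

Lemma HH_step j : HH j.+1 - HH j =
  N.+1%:R * lam ^+ j * (1 - lam) * (j%:R - k%:R) / (k%:R * (1 - lam) + N%:R * lam).
Proof.
have Hd := den_gt0; have Hi := inner_gt0; have Hn := nu_gt0.
rewrite /HH /ss /den /SLf /SLp /kstar_lhs /=; case: j => [|i] /=.
  rewrite !expr0 !expr1; field.
  by rewrite !gt_eqF.
rewrite !exprS; field.
by rewrite !gt_eqF // ?Nr_gt0.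
Qed.

Lemma HH_k : HH k = N.+1%:R * c0.
Proof.
have Hd := den_gt0; have Hi := inner_gt0; have Hn := nu_gt0.
move: Hd Hi; rewrite /HH /ss /c0 /den /SLf /SLp /kstar_lhs /=; case: k Hk => [|i] _ Hd Hi /=.
  rewrite !expr0 !expr1; field.
  by rewrite !gt_eqF // ?Nr_gt0.
rewrite !exprS; field.
have -> : (1 + i%:R : R) = i.+1%:R by rewrite -natr1 addrC.
by rewrite !gt_eqF.
Qed.

Lemma HH_k1 : HH k.+1 = HH k.
Proof. by apply/eqP; rewrite -subr_eq0 HH_step subrr !mulr0 mul0r. Qed.

Lemma zeta_kE delta : zeta_k N delta lam k = ss * delta + c0.
Proof.
have Hd := den_gt0; have Hi := inner_gt0; have Hn := nu_gt0.
rewrite /zeta_k /ss /c0 /den /= exprS; field.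
by rewrite !gt_eqF // ?Nr_gt0.
Qed.

Lemma HH_ge j : N.+1%:R * c0 <= HH j.
Proof.
rewrite -HH_k.
have [jk|kj] := leqP j k.
  rewrite -(subKn jk); elim: (k - j)%N (leq_subr j k) => [|d IH] Hd.
    by rewrite subn0.
  apply: (le_trans (IH (ltnW Hd))).
  have -> : (k - d = (k - d.+1).+1)%N by rewrite subnS prednK // subn_gt0.
  rewrite -subr_ge0 -opprB HH_step oppr_ge0.
  apply: mulr_le0_ge0; last by rewrite invr_ge0 ltW // inner_gt0.
  apply: mulr_ge0_le0.
    apply: mulr_ge0; last exact: (ltW nu_gt0).
    by apply: mulr_ge0; rewrite ?ler0n // exprn_ge0 // ltW.
  by rewrite subr_le0 ler_nat leq_subr.
rewrite -(subnKC (ltnW kj)); elim: (j - k)%N => [|d IH]; first by rewrite addn0.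
apply: (le_trans IH); rewrite addnS -subr_ge0 HH_step.
apply: divr_ge0; last exact: (ltW inner_gt0).
apply: mulr_ge0.
  apply: mulr_ge0; last exact: (ltW nu_gt0).
  by apply: mulr_ge0; rewrite ?ler0n // exprn_ge0 // ltW.
by rewrite subr_ge0 ler_nat leq_addr.
Qed.

End Scalar.

Section Main.
Variable R : realType.
Local Notation C := R[i].
Variables (D : nat) (Psi : 'cV[C]_D) (N : nat) (lam : R).
Local Notation n := N.+1.

Definition tt (rho : opT R D n) (A : {set 'I_n}) : R :=
  complex.Re (\tr (Pi Psi A *m rho)).

Definition Wg (cq : 'I_n -> R) (A : {set 'I_n}) : R :=
  \prod_k (if k \in A then cq k else 1).

Lemma expand_gen (cq : 'I_n -> R) (rho : opT R D n) :
  complex.Re (\tr (tensop (fun k => ((cq k)%:C)%C *: QQ Psi + PP Psi) *m rho)) =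
  \sum_A Wg cq A * tt rho A.
Proof.
rewrite tensop_expand mulmx_suml tr_sum Re_sum; apply: eq_bigr => A _.
rewrite (eq_tensop (M' := fun k => (if k \in A then ((cq k)%:C)%C else 1) *:
                                   (if k \in A then QQ Psi else PP Psi))); last first.
  by move=> k; case: (k \in A); rewrite ?scale1r.
rewrite tensop_scale -scalemxAl mxtraceZ.
rewrite (_ : \prod_k _ = ((Wg cq A)%:C)%C); first by rewrite ReM_real.
rewrite /Wg rmorph_prod; apply: eq_bigr => k _.
by case: (k \in A); rewrite ?rmorph1.
Qed.

Definition cp (k : 'I_n) : R := if (k < N)%N then lam else 1.
Definition cf (k : 'I_n) : R := if (k < N)%N then lam else 0.

Lemma p_sum (rho : opT R D n) : p_rho Psi lam rho = \sum_A Wg cp A * tt rho A.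
Proof.
rewrite -expand_gen /p_rho; congr (complex.Re (\tr (_ *m _))).
rewrite /OmN_tens; apply: eq_tensop => k; rewrite /cp.
case: (k < N)%N.
  by rewrite /Omega addrC.
by rewrite rmorph1 scale1r QQPP.
Qed.

Lemma f_sum (rho : opT R D n) : f_rho Psi lam rho = \sum_A Wg cf A * tt rho A.
Proof.
rewrite -expand_gen /f_rho; congr (complex.Re (\tr (_ *m _))).
rewrite /OmN_tens; apply: eq_tensop => k; rewrite /cf.
case: (k < N)%N.
  by rewrite /Omega addrC.
by rewrite rmorph0 scale0r add0r.
Qed.

Definition cperm (s : 'S_n) (a : midx D n) : midx D n := [ffun k => a (s k)].

Lemma cperm_inj s : injective (cperm s).
Proof.
move=> a a' /ffunP H; apply/ffunP => k; have := H ((s^-1)%g k).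
by rewrite !ffunE permKV.
Qed.

Lemma Pi_perm (s : 'S_n) (A : {set 'I_n}) (a b : midx D n) :
  Pi Psi (s @: A) (enum_rank a) (enum_rank b) =
  Pi Psi A (enum_rank (cperm s a)) (enum_rank (cperm s b)).
Proof.
rewrite /Pi !tensopE (reindex_inj (@perm_inj _ s)) /=.
by apply: eq_bigr => k _; rewrite mem_imset ?ffunE //; exact: perm_inj.
Qed.

Lemma tt_perm (rho : opT R D n) : perm_invariant rho ->
  forall (s : 'S_n) (A : {set 'I_n}), tt rho (s @: A) = tt rho A.
Proof.
move=> Hr s A; rewrite /tt; congr complex.Re.
rewrite /mxtrace !sum_midx.
rewrite [RHS](reindex_inj (@cperm_inj s)); apply: eq_bigr => a _.
rewrite !mxE !sum_midx.
rewrite [RHS](reindex_inj (@cperm_inj s)); apply: eq_bigr => b _.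
by rewrite Pi_perm (Hr s b a).
Qed.

Lemma avg (x g : {set 'I_n} -> R) :
  (forall (s : 'S_n) (A : {set 'I_n}), x (s @: A) = x A) ->
  N.+1%:R * \sum_(A : {set 'I_n}) g A * x A =
  \sum_(A : {set 'I_n}) (\sum_(r < n) g (tperm r ord_max @: A)) * x A.
Proof.
move=> Hx.
have H r : \sum_(A : {set 'I_n}) g A * x A = \sum_(A : {set 'I_n}) g (tperm r ord_max @: A) * x A.
  rewrite (reindex_inj (imset_inj (@perm_inj _ (tperm r ord_max)))) /=.
  by apply: eq_bigr => A _; rewrite Hx.
transitivity (\sum_(r < n) \sum_(A : {set 'I_n}) g A * x A).
  by rewrite sumr_const card_ord mulr_natl.
rewrite (eq_bigr (fun r => \sum_(A : {set 'I_n}) g (tperm r ord_max @: A) * x A)); last by move=> r _; rewrite -H.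
rewrite exchange_big /=; apply: eq_bigr => A _.
by rewrite mulr_suml.
Qed.

Lemma ltN_ord (i : 'I_n) : (i < N)%N = (i != ord_max).
Proof. by rewrite -val_eqE /= ltn_neqAle -ltnS ltn_ord andbT. Qed.

Lemma prod_tperm (c0 : R) (A : {set 'I_n}) (r : 'I_n) :
  Wg (fun k => if (k < N)%N then lam else c0) (tperm r ord_max @: A) =
  if r \in A then c0 * lam ^+ #|A|.-1 else lam ^+ #|A|.
Proof.
rewrite /Wg (reindex_inj (@perm_inj _ (tperm r ord_max))) /=.
rewrite (eq_bigr (fun k => if k \in A then (if k != r then lam else c0) else 1)); last first.
  move=> k _; rewrite mem_imset; last exact: perm_inj.
  by rewrite ltN_ord -[X in _ != X](tpermL r ord_max) (inj_eq (@perm_inj _ _)).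
case: ifP => rA.
  rewrite (bigD1 r) //= rA eqxx /=; congr (_ * _).
  rewrite (eq_bigr (fun k => if k \in A then lam else 1)); last first.
    by move=> k ->.
  rewrite -big_mkcondr /=.
  rewrite (eq_bigl (fun k => k \in A :\ r)); last by move=> k; rewrite in_setD1.
  by rewrite prodr_const (cardsD1 r A) rA.
rewrite (eq_bigr (fun k => if k \in A then lam else 1)); last first.
  move=> k _; case: ifP => // kA; case: eqP => // kr.
  by rewrite -kr kA in rA.
by rewrite -big_mkcond prodr_const.
Qed.

Lemma sum_if (A : {set 'I_n}) (X Y : R) :
  \sum_(r < n) (if r \in A then X else Y) = X *+ #|A| + Y *+ #|~: A|.
Proof.
rewrite (bigID (mem A)) /=; congr (_ + _).
  by rewrite (eq_bigr (fun _ => X)) ?sumr_const // => r ->.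
rewrite (eq_bigr (fun _ => Y)); last by move=> r /negbTE ->.
by rewrite (eq_bigl (fun r => r \in ~: A)) ?sumr_const // => r; rewrite in_setC.
Qed.

Lemma card_compl (A : {set 'I_n}) : (#|~: A|%:R : R) = N.+1%:R - #|A|%:R.
Proof.
have H := cardsC A; rewrite card_ord in H.
by rewrite -[in N.+1%:R]H natrD addrC addKr.
Qed.

Lemma sumWp (A : {set 'I_n}) : \sum_(r < n) Wg cp (tperm r ord_max @: A) = kstar_lhs N #|A| lam.
Proof.
rewrite /cp; under eq_bigr do rewrite prod_tperm.
rewrite sum_if /kstar_lhs -[_ *+ #|A|]mulr_natr -[_ *+ #|~: A|]mulr_natr card_compl mul1r.
case: eqP => [->|_]; first by rewrite mulr0 add0r subr0 expr0 mul1r.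
by rewrite addrC mulrC [_ * lam ^+ _]mulrC.
Qed.

Lemma sumWf (A : {set 'I_n}) : \sum_(r < n) Wg cf (tperm r ord_max @: A) =
  (N.+1%:R - #|A|%:R) * lam ^+ #|A|.
Proof.
rewrite /cf; under eq_bigr do rewrite prod_tperm.
by rewrite sum_if -[_ *+ #|A|]mulr_natr -[_ *+ #|~: A|]mulr_natr card_compl mul0r mul0r add0r mulrC.
Qed.

Hypothesis HPsi : unit_vector Psi.

Local Notation Lp := (SLp N lam).
Local Notation Lf := (SLf N lam).

Lemma p_avg (rho : opT R D n) : perm_invariant rho ->
  N.+1%:R * p_rho Psi lam rho = \sum_(A : {set 'I_n}) Lp #|A| * tt rho A.
Proof.
move=> Hr; rewrite p_sum avg; last exact: tt_perm.
by apply: eq_bigr => A _; rewrite sumWp.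
Qed.

Lemma f_avg (rho : opT R D n) : perm_invariant rho ->
  N.+1%:R * f_rho Psi lam rho = \sum_(A : {set 'I_n}) Lf #|A| * tt rho A.
Proof.
move=> Hr; rewrite f_sum avg; last exact: tt_perm.
by apply: eq_bigr => A _; rewrite sumWf.
Qed.

Lemma tt_ge0 (rho : opT R D n) A : density_op rho -> 0 <= tt rho A.
Proof.
case=> _ Hpsd _; apply: Re_ge0; apply: tr_psd => //.
  exact: Pi_idem.
exact: Pi_herm.
Qed.

Lemma tt_sum (rho : opT R D n) : density_op rho -> \sum_(A : {set 'I_n}) tt rho A = 1.
Proof.
case=> _ _ Htr; rewrite /tt -Re_sum -tr_sum -mulmx_suml Pi_sum mul1mx Htr.
by [].
Qed.

Lemma f_ge0 (rho : opT R D n) : 0 <= lam -> density_op rho -> 0 <= f_rho Psi lam rho.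
Proof.
move=> Hl Hd; rewrite f_sum; apply: sumr_ge0 => A _; apply: mulr_ge0; last exact: tt_ge0.
rewrite /Wg; apply: prodr_ge0 => k _; rewrite /cf.
by case: (k \in A); case: (k < N)%N; rewrite ?ler01.
Qed.

Section Construct.
Variable x : {set 'I_n} -> R.
Hypothesis x_ge0 : forall A, 0 <= x A.
Hypothesis x_sum : \sum_(A : {set 'I_n}) x A = 1.
Hypothesis x_sym : forall (s : 'S_n) (A : {set 'I_n}), x (s @: A) = x A.
Hypothesis HD : (2 <= D)%N.

Definition dd : R := D%:R - 1.

Lemma dd_gt0 : 0 < dd.
Proof.
rewrite /dd subr_gt0 (_ : 1 = 1%:R) // ltr_nat; exact: HD.
Qed.

Definition cc (B : {set 'I_n}) : C := ((x B / dd ^+ #|B|)%:C)%C.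

Definition rho0 : opT R D n := \sum_(B : {set 'I_n}) cc B *: Pi Psi B.

Lemma ddC k : ((D%:R - 1) ^+ k : C) = ((dd ^+ k)%:C)%C.
Proof. by rewrite rmorphXn rmorphB rmorph_nat rmorph1. Qed.

Lemma tt_rho0 A : tt rho0 A = x A.
Proof.
rewrite /tt /rho0 mulmx_sumr tr_sum (bigD1 A) //= big1; last first.
  move=> B nBA; rewrite -scalemxAr Pi_orth ?scaler0 ?mxtrace0 //.
  by rewrite eq_sym.
rewrite addr0 -scalemxAr mxtraceZ (Pi_idem HPsi) (Pi_tr HPsi) ddC /cc -rmorphM /=.
by rewrite divfK // expf_neq0 // gt_eqF // dd_gt0.
Qed.

Lemma real_cc B : (cc B)^* = cc B.
Proof. by apply: conj_Creal; rewrite /cc complex_real. Qed.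

Lemma rho0_density : density_op rho0.
Proof.
split.
- apply/matrixP => i j; rewrite adjE !summxE rmorph_sum; apply: eq_bigr => B _.
  rewrite !scaleE rmorphM /= real_cc; congr (_ * _).
  by have := @Pi_herm _ _ Psi _ B; move/matrixP/(_ i j); rewrite adjE.
- move=> v; rewrite mulmx_sumr mulmx_suml summxE; apply: sumr_ge0 => B _.
  rewrite -scalemxAr -scalemxAl scaleE; apply: mulr_ge0.
    by rewrite /cc ler0c divr_ge0 // exprn_ge0 // ltW // dd_gt0.
  rewrite -(Pi_idem HPsi) -{1}(@Pi_herm _ _ Psi _ B) !mulmxA -adjM -mulmxA.
  exact: quad_ge0.
- rewrite /rho0 tr_sum -(rmorph1 (real_complex R)) -x_sum rmorph_sum.
  apply: eq_bigr => B _; rewrite mxtraceZ (Pi_tr HPsi) ddC /cc -rmorphM /=.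
  by rewrite divfK // expf_neq0 // gt_eqF // dd_gt0.
Qed.

Lemma cc_sym (s : 'S_n) (B : {set 'I_n}) : cc (s @: B) = cc B.
Proof. by rewrite /cc x_sym card_imset //; exact: perm_inj. Qed.

Lemma rho0_perm : perm_invariant rho0.
Proof.
move=> s a b; rewrite -/(cperm s a) -/(cperm s b) /rho0 !summxE.
rewrite [RHS](eq_bigr (fun B => cc B * Pi Psi (s @: B) (enum_rank a) (enum_rank b))); last first.
  by move=> B _; rewrite scaleE Pi_perm.
rewrite [LHS](reindex_inj (imset_inj (@perm_inj _ s))) /=.
by apply: eq_bigr => B _; rewrite scaleE cc_sym.
Qed.

End Construct.

End Main.

Section Final.
Variable R : realType.
Variable N : nat.

Definition ux (j : nat) (A : {set 'I_N.+1}) : R :=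
  (#|A| == j)%:R / ('C(N.+1, j))%:R.

Lemma ux_sum (G : nat -> R) j : (j <= N.+1)%N ->
  \sum_(A : {set 'I_N.+1}) G #|A| * ux j A = G j.
Proof.
move=> Hj.
have HC : ('C(N.+1, j)%:R : R) != 0 by rewrite pnatr_eq0 -lt0n bin_gt0.
rewrite (eq_bigr (fun A : {set 'I_N.+1} => if #|A| == j then G j / 'C(N.+1, j)%:R else 0)); last first.
  by move=> A _; rewrite /ux; case: eqP => [->|_] /=; rewrite ?mul1r ?mul0r ?mulr0.
rewrite -big_mkcond /=.
rewrite (eq_bigl (fun A => A \in [set A : {set 'I_N.+1} | #|A| == j])); last first.
  by move=> A; rewrite inE.
by rewrite sumr_const card_draws card_ord -[_ *+ _]mulr_natr divfK.
Qed.

Lemma ux_ge0 j A : 0 <= ux j A.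
Proof. by rewrite /ux divr_ge0 ?ler0n. Qed.

Lemma ux_sym j (s : 'S_N.+1) (A : {set 'I_N.+1}) : ux j (s @: A) = ux j A.
Proof. by rewrite /ux card_imset //; exact: perm_inj. Qed.

Definition mixw (a b : R) (j1 j2 : nat) (A : {set 'I_N.+1}) : R :=
  a * ux j1 A + b * ux j2 A.

Lemma mix_sum (G : nat -> R) a b j1 j2 : (j1 <= N.+1)%N -> (j2 <= N.+1)%N ->
  \sum_(A : {set 'I_N.+1}) G #|A| * mixw a b j1 j2 A = a * G j1 + b * G j2.
Proof.
move=> H1 H2.
rewrite (eq_bigr (fun A : {set 'I_N.+1} => a * (G #|A| * ux j1 A) + b * (G #|A| * ux j2 A))); last first.
  by move=> A _; rewrite /mixw; ring.
by rewrite big_split /= -!mulr_sumr !ux_sum.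
Qed.

Theorem final (D : nat) (Psi : 'cV[R[i]]_D) (lam delta : R) (ks : nat) :
  (2 <= D)%N -> unit_vector Psi ->
  (1 <= N)%N -> 0 < lam -> lam < 1 -> 0 < delta -> delta <= 1 ->
  is_kstar N delta lam ks ->
  IsMin (zeta_values Psi lam N delta) (zeta_formula N delta lam ks) /\
  IsMin (F_values Psi lam N delta) (zeta_formula N delta lam ks / delta).
Proof.
move=> HD HPsi HN Hl0 Hl1 Hd0 Hd1 [Hks Hmax].
have HN1 : (0 : R) < N.+1%:R by rewrite ltr0n.
have HN1' : (N.+1%:R : R) != 0 by rewrite gt_eqF.
have Cons : forall (a b : R) (j1 j2 : nat), 0 <= a -> 0 <= b -> a + b = 1 ->
    (j1 <= N.+1)%N -> (j2 <= N.+1)%N ->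
  exists rho : opT R D N.+1, [/\ density_op rho, perm_invariant rho,
    N.+1%:R * p_rho Psi lam rho = a * SLp N lam j1 + b * SLp N lam j2 &
    N.+1%:R * f_rho Psi lam rho = a * SLf N lam j1 + b * SLf N lam j2].
  move=> a b j1 j2 Ha Hb Hab H1 H2.
  pose x := mixw a b j1 j2.
  have xg : forall A, 0 <= x A.
    by move=> A; rewrite /x /mixw addr_ge0 // mulr_ge0 // ux_ge0.
  have xs : \sum_(A : {set 'I_N.+1}) x A = 1.
    have := mix_sum (fun _ => 1) a b H1 H2; rewrite !mulr1 Hab => <-.
    by apply: eq_bigr => A _; rewrite mul1r.
  have xy : forall (s : 'S_N.+1) (A : {set 'I_N.+1}), x (s @: A) = x A.
    by move=> s A; rewrite /x /mixw !ux_sym.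
  have Hpi := rho0_perm Psi xy.
  exists (rho0 Psi x); split => //.
  - exact: rho0_density.
  - rewrite p_avg //; rewrite -(mix_sum _ _ _ H1 H2).
    by apply: eq_bigr => A _; rewrite tt_rho0.
  - rewrite f_avg //; rewrite -(mix_sum _ _ _ H1 H2).
    by apply: eq_bigr => A _; rewrite tt_rho0.
rewrite /zeta_formula; case: ifP => Hc.
- have [rho [Hd Hpi Hp Hf]] := Cons 1 0 N.+1 N.+1 ler01 (lexx 0) (addr0 1) (leqnn _) (leqnn _).
  rewrite Lp_Nplus1 mul1r mul0r addr0 in Hp.
  rewrite Lf_Nplus1 mulr0 mul0r addr0 -(mulr0 N.+1%:R) in Hf.
  have Hp' := mulfI HN1' Hp; have Hf' := mulfI HN1' Hf.
  have Hfeas : feasible Psi lam delta rho by split => //; rewrite Hp'.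
  split; split.
  + by exists rho; split => //; rewrite Hf'.
  + move=> y [r [[Hr1 Hr2 Hr3] ->]]; apply: f_ge0 => //; exact: ltW.
  + by exists rho; split => //; rewrite Hf' !mul0r.
  + move=> y [r [[Hr1 Hr2 Hr3] ->]]; rewrite mul0r; apply: divr_ge0.
      by apply: f_ge0 => //; exact: ltW.
    exact: le_trans (ltW Hd0) Hr3.
have Hlt : lam ^+ N < delta by rewrite ltNge Hc.
have HksN : (ks <= N)%N.
  rewrite leqNgt; apply/negP => H.
  have := Lp_mono N Hl0 Hl1 H; rewrite Lp_Nplus1 => H2.
  have : N.+1%:R * lam ^+ N < N.+1%:R * delta by rewrite ltr_pM2l.
  by rewrite ltNge (le_trans Hks H2).
have Hk1 : SLp N lam ks.+1 < N.+1%:R * delta.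
  by rewrite ltNge; apply/negP => H; have := Hmax _ H; rewrite ltnn.
set L1 := SLp N lam ks; set L2 := SLp N lam ks.+1.
have HL : 0 < L1 - L2 by rewrite subr_gt0 (lt_le_trans Hk1 Hks).
pose a := (N.+1%:R * delta - L2) / (L1 - L2).
pose b := 1 - a.
have Ha0 : 0 <= a by apply: divr_ge0; [rewrite subr_ge0; exact: ltW | exact: ltW].
have Ha1 : a <= 1.
  by rewrite /a ler_pdivrMr // mul1r lerD2r.
have Hb0 : 0 <= b by rewrite /b subr_ge0.
have Hab1 : a + b = 1 by rewrite /b addrC subrK.
have Hmul : a * (L1 - L2) = N.+1%:R * delta - L2 by rewrite /a divfK // gt_eqF.
have Hab : a * L1 + b * L2 = N.+1%:R * delta.
  rewrite (_ : a * L1 + b * L2 = a * (L1 - L2) + L2); first by rewrite Hmul subrK.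
  by rewrite /b; ring.
have [rho [Hd Hpi Hp Hf]] := Cons a b ks ks.+1 Ha0 Hb0 Hab1 (leqW HksN) HksN.
rewrite -/L1 -/L2 Hab in Hp.
have Hp' := mulfI HN1' Hp.
set ss0 := ss N lam ks; set cc0 := c0 N lam ks.
have Hss : 0 < ss0 by apply: ss_gt0.
have Hcc : cc0 < 0 by apply: c0_lt0.
have Hz := zeta_kE HN Hl0 Hl1 ks delta; rewrite -/ss0 -/cc0 in Hz.
have E1 : SLf N lam ks = N.+1%:R * cc0 + ss0 * L1.
  by rewrite -(HH_k HN Hl0 Hl1 HksN) /HH subrK.
have E2 : SLf N lam ks.+1 = N.+1%:R * cc0 + ss0 * L2.
  by rewrite -(HH_k HN Hl0 Hl1 HksN) -(HH_k1 HN Hl0 Hl1) /HH subrK.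
have Hf' : f_rho Psi lam rho = zeta_k N delta lam ks.
  apply: (mulfI HN1'); rewrite Hf Hz E1 E2.
  rewrite (_ : a * (N.+1%:R * cc0 + ss0 * L1) + b * (N.+1%:R * cc0 + ss0 * L2) =
     (a + b) * (N.+1%:R * cc0) + ss0 * (a * L1 + b * L2)); last by ring.
  by rewrite Hab Hab1; ring.
have LB : forall r : opT R D N.+1, feasible Psi lam delta r ->
    cc0 + ss0 * p_rho Psi lam r <= f_rho Psi lam r.
  move=> r [Hr1 Hr2 Hr3].
  have E : N.+1%:R * (f_rho Psi lam r - ss0 * p_rho Psi lam r) =
      \sum_(A : {set 'I_N.+1}) HH N lam ks #|A| * tt Psi r A.
    rewrite mulrBr mulrCA f_avg // p_avg // mulr_sumr -sumrB.
    by apply: eq_bigr => A _; rewrite /HH mulrBl mulrA.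
  have : N.+1%:R * cc0 <= N.+1%:R * (f_rho Psi lam r - ss0 * p_rho Psi lam r).
    rewrite E (_ : N.+1%:R * cc0 = \sum_(A : {set 'I_N.+1}) N.+1%:R * cc0 * tt Psi r A); last by rewrite -mulr_sumr tt_sum // mulr1.
    apply: ler_sum => A _; apply: ler_wpM2r.
      exact: tt_ge0.
    exact: HH_ge.
  rewrite ler_pM2l // => H; lra.
split; split.
- by exists rho; split => //; split => //; rewrite Hp'.
- move=> y [r [Hr ->]]; have := LB r Hr; case: Hr => _ _ Hr3.
  rewrite Hz => H; apply: le_trans H; rewrite addrC lerD2l.
  by apply: ler_wpM2l => //; exact: ltW.
- by exists rho; split => //; [split => //; rewrite Hp' | rewrite Hp' Hf'].
- move=> y [r [Hr ->]]; have := LB r Hr; case: Hr => _ _ Hr3 H.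
  have Hp0 : 0 < p_rho Psi lam r by exact: lt_le_trans Hd0 Hr3.
  rewrite ler_pdivlMr // mulrAC ler_pdivrMr // Hz.
  nra.
Qed.

End Final.

Unset Implicit Arguments.

Theorem theorem1 (R : realType) (D : nat) (Psi : 'cV[R[i]]_D)
    (N : nat) (lam delta : R) (ks : nat) :
  (2 <= D)%N -> unit_vector Psi ->
  (1 <= N)%N -> 0 < lam -> lam < 1 -> 0 < delta -> delta <= 1 ->
  is_kstar N delta lam ks ->
  IsMin (zeta_values Psi lam N delta) (zeta_formula N delta lam ks) /\
  IsMin (F_values Psi lam N delta) (zeta_formula N delta lam ks / delta).
Proof. exact: final. Qed.
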